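(* Let $S$ be an $E$-demigroup, and let $E,E'\subseteq E(S)$ be right pre-reduced sets together with a bijection $E\to E'$, $e\mapsto e'$, such that $e\sim_r e'$ for all $e\in E$. Suppose $d(S)\subseteq E'$ and $d(e)=d(e')$ for all $e\in E$. Then $S$ is an $E'$-demigroup with respect to the same operation $d$, and the map $(e,s)\mapsto(e',e's)$ is an isomorphism of constellations from $C^d_E(S)$ onto $C^d_{E'}(S)$ (with inverse $(e',s)\mapsto(e,es)$). In particular, if $S$ is a left $E$-monoid then $C_E(S)\cong C_{E'}(S)$, and if $S$ is a left $E$-monoid with zero then $C^0_E(S)\cong C^0_{E'}(S)$.
   Context: For a semigroup $S$, $E(S)$ is its set of idempotents. For $e,f\in E(S)$, $e\le_r f$ iff $e=ef$, and $e\sim_r f$ iff $e\le_r f$ and $f\le_r e$. A subset $E\subseteq E(S)$ is right pre-reduced if $e=ef$ and $f=fe$ imply $e=f$ for all $e,f\in E$. A demigroup is a semigroup $S$ with a unary operation $d$ such that for all $x,y\in S$: $d(x)\in E(S)$, $d(x)x=x$ and $d(xy)=d(xd(y))$; $d(S)=\{d(s)\mid s\in S\}$. For $E\subseteq E(S)$, a demigroup $S$ is an $E$-demigroup if $d(s)\in E$ for all $s\in S$ and $ed(e)=e$ for all $e\in E$. $C_E(S)=\{(e,s)\in E\times S\mid es=s\}$ with partial product $(e,s)\circ(f,t)=(e,st)$ defined exactly when $sf=s$, and $D((e,s))=(e,e)$; $C^d_E(S)=\{(e,s)\in C_E(S)\mid d(e)=d(s)\}$ with the restricted operations (these are constellations).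 Let $S$ be a monoid with $1\in E\subseteq E(S)$. $S$ regarded as an $E$-demigroup via $d(s)=1$ for all $s$ is a left $E$-monoid; then $C^d_E(S)=C_E(S)$. If $S$ has a zero $0$, is integral ($st=0$ implies $s=0$ or $t=0$) and $0\in E$, then $S$ regarded as an $E$-demigroup via $d(0)=0$ and $d(s)=1$ for $s\neq0$ is a left $E$-monoid with zero; then $C^d_E(S)=C^0_E(S):=\{(e,s)\in C_E(S)\mid s=0\Rightarrow e=0\}$. An isomorphism of constellations $\rho:P\to Q$ is a bijection such that $\rho(D(s))=D(\rho(s))$ for all $s$, and $s\circ t$ exists iff $\rho(s)\circ\rho(t)$ exists, in which case $\rho(s\circ t)=\rho(s)\circ\rho(t)$. *)

(* Defs.v *)
Set Implicit Arguments.

Section Defs.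
Variables (S : Type) (mul : S -> S -> S).

Definition associative := forall x y z, mul x (mul y z) = mul (mul x y) z.

Definition idempotent (e : S) := mul e e = e.

Definition le_r (e f : S) := e = mul e f.
Definition sim_r (e f : S) := le_r e f /\ le_r f e.

Definition right_pre_reduced (E : S -> Prop) :=
  (forall e, E e -> idempotent e) /\
  (forall e f, E e -> E f -> e = mul e f -> f = mul f e -> e = f).

(* (S, d) is a demigroup (S is assumed to be a semigroup separately) *)
Definition is_demigroup (d : S -> S) :=
  (forall x, idempotent (d x)) /\
  (forall x, mul (d x) x = x) /\
  (forall x y, d (mul x y) = d (mul x (d y))).

Definition is_E_demigroup (d : S -> S) (E : S -> Prop) :=
  (forall e, E e -> idempotent e) /\
  is_demigroup d /\
  (forall s, E (d s)) /\
  (forall e, E e -> mul e (d e) = e).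

Definition C_E (E : S -> Prop) (p : S * S) : Prop :=
  E (fst p) /\ mul (fst p) (snd p) = snd p.
Definition Cd_E (d : S -> S) (E : S -> Prop) (p : S * S) : Prop :=
  C_E E p /\ d (fst p) = d (snd p).
Definition C0_E (z : S) (E : S -> Prop) (p : S * S) : Prop :=
  C_E E p /\ (snd p = z -> fst p = z).

Definition cdefined (p q : S * S) : Prop := mul (snd p) (fst q) = snd p.
Definition cprod (p q : S * S) : S * S := (fst p, mul (snd p) (snd q)).
Definition cD (p : S * S) : S * S := (fst p, fst p).

Definition constellation_iso (P Q : S * S -> Prop) (rho : S * S -> S * S) :=
  (forall p, P p -> Q (rho p)) /\
  (forall p q, P p -> P q -> rho p = rho q -> p = q) /\
  (forall q, Q q -> exists p, P p /\ rho p = q) /\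
  (forall p, P p -> rho (cD p) = cD (rho p)) /\
  (forall p q, P p -> P q ->
     (cdefined p q <-> cdefined (rho p) (rho q))) /\
  (forall p q, P p -> P q -> cdefined p q ->
     rho (cprod p q) = cprod (rho p) (rho q)).

Definition bijection_on (E E' : S -> Prop) (f : S -> S) :=
  (forall e, E e -> E' (f e)) /\
  (forall e1 e2, E e1 -> E e2 -> f e1 = f e2 -> e1 = e2) /\
  (forall e', E' e' -> exists e, E e /\ f e = e').

Definition prime_map (f : S -> S) (p : S * S) : S * S :=
  (f (fst p), mul (f (fst p)) (snd p)).

End Defs.

(* Main.v *)
Require Import Defs.
From Stdlib Require Import Setoid.

Section Core.
Variables (S : Type) (mul : S -> S -> S) (E E' : S -> Prop) (f : S -> S).
Hypothesis assoc : associative mul.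
Hypothesis HE : right_pre_reduced mul E.
Hypothesis HE' : right_pre_reduced mul E'.
Hypothesis bij : bijection_on E E' f.
Hypothesis sim : forall e, E e -> sim_r mul e (f e).

Lemma core (P Q : S * S -> Prop) :
  (forall p, P p -> C_E mul E p) ->
  (forall q, Q q -> C_E mul E' q) ->
  (forall p, P p -> Q (prime_map mul f p)) ->
  (forall e s, E e -> Q (f e, s) -> P (e, mul e s)) ->
  constellation_iso mul P Q (prime_map mul f).
Proof.
  intros PC QC PQ QP.
  destruct bij as [b1 [b2 b3]].
  unfold associative in assoc.
  unfold constellation_iso, prime_map, cD, cdefined, cprod; simpl.
  split; [|split; [|split; [|split; [|split]]]].
  - exact PQ.
  - intros [e s] [g t] Hp Hq Heq; simpl in *.
    destruct (PC _ Hp) as [Ee Hes]; destruct (PC _ Hq) as [Eg Hgt]; simpl in *.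
    injection Heq as H1 H2.
    assert (e = g) by (apply b2; auto). subst g.
    destruct (sim e Ee) as [s1 s2]; unfold le_r in *.
    rewrite <- Hes, <- Hgt, s1, <- !assoc, H2. reflexivity.
  - intros [e' s] Hq.
    destruct (QC _ Hq) as [Ee' Hs]; simpl in *.
    destruct (b3 _ Ee') as [e [Ee He]]. subst e'.
    exists (e, mul e s). split. apply QP; auto.
    destruct (sim e Ee) as [s1 s2]; unfold le_r in *; simpl.
    rewrite assoc, <- s2, Hs. reflexivity.
  - intros [e s] Hp; simpl.
    destruct (PC _ Hp) as [Ee _]; simpl in *.
    destruct (sim e Ee) as [s1 s2]; unfold le_r in *.
    rewrite <- s2. reflexivity.
  - intros [e s] [g t] Hp Hq; simpl in *. split; intro Hd.
   + destruct (PC _ Hq) as [Eg _]; simpl in *.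
    destruct (sim g Eg) as [s1 s2]; unfold le_r in *.
    rewrite <- assoc; f_equal. rewrite <- Hd at 1. rewrite <- assoc, <- s1. exact Hd.
   +
    destruct (PC _ Hp) as [Ee Hes]; destruct (PC _ Hq) as [Eg _]; simpl in *.
    destruct (sim e Ee) as [e1 e2]; destruct (sim g Eg) as [s1 s2]; unfold le_r in *.
    assert (H : s = mul e (mul (f e) s)) by (rewrite assoc, <- e1, Hes; reflexivity).
    rewrite H at 1. rewrite <- assoc. rewrite <- Hd.
    rewrite <- (assoc _ (f g) g), <- s2, Hd. symmetry; exact H.
  - intros [e s] [g t] Hp Hq Hd; simpl in *.
    destruct (PC _ Hq) as [Eg _]; simpl in *.
    destruct (sim g Eg) as [s1 s2]; unfold le_r in *.
    f_equal. rewrite <- assoc. f_equal. rewrite <- Hd at 2.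
    rewrite <- assoc, (assoc g), <- s1, assoc, Hd. reflexivity.
Qed.
End Core.

Theorem proposition3p4 :
  (* main statement *)
  (forall (S : Type) (mul : S -> S -> S) (d : S -> S)
          (E E' : S -> Prop) (f : S -> S),
     associative mul ->
     is_E_demigroup mul d E ->
     right_pre_reduced mul E -> right_pre_reduced mul E' ->
     bijection_on E E' f ->
     (forall e, E e -> sim_r mul e (f e)) ->
     (forall s, E' (d s)) ->
     (forall e, E e -> d e = d (f e)) ->
     is_E_demigroup mul d E' /\
     constellation_iso mul (Cd_E mul d E) (Cd_E mul d E') (prime_map mul f) /\
     (* the inverse is (e', s) |-> (e, e s) *)
     (forall e s, E e -> Cd_E mul d E' (f e, s) ->
        Cd_E mul d E (e, mul e s) /\ prime_map mul f (e, mul e s) = (f e, s))) /\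
  (* left E-monoid: d(s) = 1 for all s *)
  (forall (S : Type) (mul : S -> S -> S) (one : S)
          (E E' : S -> Prop) (f : S -> S),
     associative mul ->
     (forall x, mul one x = x) -> (forall x, mul x one = x) ->
     E one ->
     right_pre_reduced mul E -> right_pre_reduced mul E' ->
     bijection_on E E' f ->
     (forall e, E e -> sim_r mul e (f e)) ->
     constellation_iso mul (C_E mul E) (C_E mul E') (prime_map mul f)) /\
  (* left E-monoid with zero: integral, 0 ∈ E, d(0) = 0, d(s) = 1 otherwise *)
  (forall (S : Type) (mul : S -> S -> S) (one zero : S)
          (E E' : S -> Prop) (f : S -> S),
     associative mul ->
     (forall x, mul one x = x) -> (forall x, mul x one = x) ->
     (forall x, mul zero x = zero) -> (forall x, mul x zero = zero) ->
     (forall s t, mul s t = zero -> s = zero \/ t = zero) ->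
     E one -> E zero ->
     right_pre_reduced mul E -> right_pre_reduced mul E' ->
     bijection_on E E' f ->
     (forall e, E e -> sim_r mul e (f e)) ->
     constellation_iso mul (C0_E mul zero E) (C0_E mul zero E') (prime_map mul f)).
Proof.
  split; [|split].
  - intros S mul d E E' f assoc [Ei [[d1 [d2 d3]] [dE edE]]] HE HE' bij sim dE' dfe.
    destruct bij as [b1 [b2 b3]].
    destruct HE as [HEi HEr]; destruct HE' as [HE'i HE'r].
    unfold associative in assoc.
    assert (Hkey : forall e, E e -> mul (f e) (d e) = f e).
    { intros e Ee. destruct (sim e Ee) as [s1 s2]; unfold le_r in *.
      rewrite s2 at 1. rewrite <- assoc, edE by auto. symmetry; exact s2. }
    assert (QP : forall e s, E e -> Cd_E mul d E' (f e, s) -> Cd_E mul d E (e, mul e s)).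
    { intros e s Ee [[_ Hs] Hd]; simpl in *.
      destruct (sim e Ee) as [s1 s2]; unfold le_r in *.
      repeat split; simpl; auto.
      - rewrite assoc, HEi; auto.
      - rewrite d3, <- Hd, <- dfe by auto. rewrite edE by auto. reflexivity. }
    assert (PQ : forall p, Cd_E mul d E p -> Cd_E mul d E' (prime_map mul f p)).
    { intros [e s] [[Ee Hs] Hd]; simpl in *. unfold prime_map; simpl.
      repeat split; simpl; auto.
      - rewrite assoc, HE'i; auto.
      - rewrite d3, <- Hd, Hkey by auto. symmetry; auto. }
    split; [|split].
    + split; [exact HE'i|split; [split; [exact d1|split; [exact d2|exact d3]]|split; [exact dE'|]]].
      intros e' Ee'. destruct (b3 _ Ee') as [e [Ee He]]. subst e'.
      rewrite <- dfe by auto. auto.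
    + apply (@core S mul E E' f assoc (conj b1 (conj b2 b3)) sim); auto.
      * intros p [H _]; exact H.
      * intros p [H _]; exact H.
    + intros e s Ee Hq. split. apply QP; auto.
      destruct Hq as [[_ Hs] _]; simpl in *.
      destruct (sim e Ee) as [s1 s2]; unfold le_r in *.
      unfold prime_map; simpl. rewrite assoc, <- s2, Hs. reflexivity.
  - intros S mul one E E' f assoc _ _ _ HE HE' bij sim.
    apply (@core S mul E E' f assoc bij sim); auto.
    + intros [e s] [Ee Hs]; simpl in *. unfold prime_map, C_E; simpl.
      split. apply bij; auto. rewrite (assoc (f e)), (proj1 HE' (f e)) by (apply bij; auto). reflexivity.
    + intros e s Ee [_ Hs]; simpl in *. split; simpl; auto.
      rewrite assoc, (proj1 HE e) by auto. reflexivity.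
  - intros S mul one zero E E' f assoc _ _ z1 z2 integ _ Ez HE HE' bij sim.
    destruct bij as [b1 [b2 b3]].
    assert (fz : f zero = zero).
    { destruct (sim zero Ez) as [_ s2]; unfold le_r in s2. rewrite s2, z2. reflexivity. }
    apply (@core S mul E E' f assoc (conj b1 (conj b2 b3)) sim); auto.
    + intros p [H _]; exact H.
    + intros p [H _]; exact H.
    + intros [e s] [[Ee Hs] Hz]; simpl in *. unfold prime_map, C0_E, C_E; simpl.
      split; [split|].
      * auto.
      * rewrite (assoc (f e)), (proj1 HE' (f e)) by auto. reflexivity.
      * intros H. destruct (integ _ _ H) as [H'|H']; auto.
        rewrite Hz by auto. exact fz.
    + intros e s Ee [[_ Hs] Hz]; simpl in *. split; [split|]; simpl; auto.
      * rewrite assoc, (proj1 HE e) by auto. reflexivity.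
      * intros H. destruct (integ _ _ H) as [H'|H']; auto.
        apply b2; auto. rewrite fz. auto.
Qed.
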